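(* In the full-information setting, run Gaptron with gap map $a(\mathbf W_t,\mathbf x_t)=1-\mathbb 1[p_t^\star\ge 0.5]\,p_t^\star$, learning rate $\eta=\frac{\ln 2}{2KX^2}$, exploration rate $\gamma=0$, and the logistic loss $\ell_t(\mathbf W)=-\log_2\sigma(\mathbf W,\mathbf x_t,y_t)$. Then for every $\mathbf U\in\mathcal W$, $$\mathbb E\Big[\sum_{t=1}^T\mathbb 1[y'_t\ne y_t]\Big]\le\sum_{t=1}^T\ell_t(\mathbf U)+\frac{KX^2\|\mathbf U\|^2}{\ln 2}.$$
   Context: Setting and notation. Fix integers $K\ge 2$, $d\ge1$, $T\ge1$ and reals $X>0$, $D>0$. Matrices $\mathbf W\in\mathbb{R}^{K\times d}$ have rows $\mathbf W^1,\dots,\mathbf W^K\in\mathbb{R}^d$ and are identified with vectors in $\mathbb{R}^{Kd}$; $\langle\cdot,\cdot\rangle$ is the Euclidean inner product and $\|\cdot\|$ the Euclidean (Frobenius) norm. $\mathcal W=\{\mathbf W:\|\mathbf W\|\le D\}$. $\mathbf e_k$ is the $k$-th standard basis vector of $\mathbb R^K$ and $\mathbf 1\in\mathbb R^K$ the all-ones vector. In each round $t=1,\dots,T$ the environment chooses a label $y_t\in\{1,\dots,K\}$ and a feature vector $\mathbf x_t\in\mathbb R^d$ with $\|\mathbf x_t\|\le X$ (possibly depending on the learner's past predictions $y'_1,\dots,y'_{t-1}$ but not on its current random draw); the learner sees $\mathbf x_t$, outputs a random label $y'_t$, and then observes $y_t$ (full-information setting) or only $\mathbb 1[y'_t\ne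 y_t]$ (bandit setting). Gaptron, with learning rate $\eta>0$, exploration rate $\gamma\in[0,1]$, gap map $a:\mathbb R^{K\times d}\times\mathbb R^d\to[0,1]$ and loss functions $\ell_t$: set $\mathbf W_1=\mathbf 0$; for $t=1,\dots,T$: let $y_t^\star=\arg\max_k\langle \mathbf W_t^k,\mathbf x_t\rangle$ (ties broken arbitrarily), $a_t=a(\mathbf W_t,\mathbf x_t)$, $\mathbf p'_t=(1-\max\{a_t,\gamma\})\mathbf e_{y_t^\star}+\max\{a_t,\gamma\}\frac1K\mathbf 1$; draw $y'_t\sim\mathbf p'_t$ ($p'_t(k)$ denotes the probability of label $k$); set $\mathbf g_t=\nabla\ell_t(\mathbf W_t)$; update $\mathbf W_{t+1}=\arg\min_{\mathbf W\in\mathcal W}\ \eta\langle\mathbf g_t,\mathbf W\rangle+\frac12\|\mathbf W-\mathbf W_t\|^2$. $\mathbb E$ denotes expectation over the learner's randomization. Softmax: $\sigma(\mathbf W,\mathbf x,k)=\exp(\langle\mathbf W^k,\mathbf x\rangle)/\sum_{j=1}^K\exp(\langle\mathbf W^j,\mathbf x\rangle)$, and $p_t^\star=\max_k\sigma(\mathbf W_t,\mathbf x_t,k)$. *)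

(* Defs.v *)
From HB Require Import structures.
From mathcomp Require Import all_boot all_order all_algebra.
From mathcomp Require Import all_classical all_reals all_analysis.
Set Implicit Arguments. Unset Strict Implicit. Unset Printing Implicit Defensive.
Import Order.TTheory GRing.Theory Num.Theory.
Local Open Scope ring_scope.

Section Gaptron.
Variables (R : realType) (K d : nat).

Definition inner_row (W : 'M[R]_(K, d)) (x : 'rV[R]_d) (k : 'I_K) : R :=
  \sum_(j < d) W k j * x 0 j.

Definition mxdot (A B : 'M[R]_(K, d)) : R := \sum_(i < K) \sum_(j < d) A i j * B i j.
Definition mxnorm (A : 'M[R]_(K, d)) : R := Num.sqrt (mxdot A A).

Definition rnorm (x : 'rV[R]_d) : R := Num.sqrt (\sum_(j < d) x 0 j ^+ 2).

Definition softmax (W : 'M[R]_(K, d)) (x : 'rV[R]_d) (k : 'I_K) : R :=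
  expR (inner_row W x k) / \sum_(j < K) expR (inner_row W x j).

Definition pstar (W : 'M[R]_(K, d)) (x : 'rV[R]_d) : R :=
  \big[Num.max/0]_(k < K) softmax W x k.

Definition gap_logistic (W : 'M[R]_(K, d)) (x : 'rV[R]_d) : R :=
  1 - (if 1 / 2 <= pstar W x then pstar W x else 0).

Definition log2 (z : R) : R := ln z / ln 2.

Definition logloss (W : 'M[R]_(K, d)) (x : 'rV[R]_d) (y : 'I_K) : R :=
  - log2 (softmax W x y).

Definition is_argmax_label (ystar : 'M[R]_(K, d) -> 'rV[R]_d -> 'I_K) : Prop :=
  forall W x k, inner_row W x k <= inner_row W x (ystar W x).

(* G x y W is the gradient at W of W |-> logloss W x y: its Frobenius inner
   product with any direction V is the directional derivative along V. *)
Definition is_logloss_gradient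
  (G : 'rV[R]_d -> 'I_K -> 'M[R]_(K, d) -> 'M[R]_(K, d)) : Prop :=
  forall x y W V,
    is_derive (0 : R) (1 : R) (fun s : R => logloss (W + s *: V) x y)
      (mxdot (G x y W) V).

Definition is_proj_step (upd : 'M[R]_(K, d) -> 'M[R]_(K, d) -> 'M[R]_(K, d))
  (eta D : R) : Prop :=
  forall W g, mxnorm (upd W g) <= D /\
    forall V, mxnorm V <= D ->
      eta * mxdot g (upd W g) + 1 / 2 * mxnorm (upd W g - W) ^+ 2
      <= eta * mxdot g V + 1 / 2 * mxnorm (V - W) ^+ 2.

(* p'_t(k) = (1 - m) 1[k = y*] + m / K, with m = max{a_t, gamma} *)
Definition predprob (m : R) (ys k : 'I_K) : R :=
  (1 - m) * (k == ys)%:R + m / K%:R.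

Variables (a : 'M[R]_(K, d) -> 'rV[R]_d -> R) (gamma : R)
  (ystar : 'M[R]_(K, d) -> 'rV[R]_d -> 'I_K)
  (G : 'rV[R]_d -> 'I_K -> 'M[R]_(K, d) -> 'M[R]_(K, d))
  (upd : 'M[R]_(K, d) -> 'M[R]_(K, d) -> 'M[R]_(K, d))
  (adv : seq 'I_K -> 'rV[R]_d * 'I_K)
  (payoff : 'rV[R]_d -> 'I_K -> 'I_K -> R).

(* Expected total payoff, over the learner's randomization, of the remaining
   n rounds of full-information Gaptron, given the history h of the learner's
   past predictions and the current weights W.  The environment (adaptive)
   chooses (x_t, y_t) = adv h as a function of the past predictions; the
   payoff of round t is payoff x_t y_t y'_t. *)
Fixpoint gaptron_exp (n : nat) (h : seq 'I_K) (W : 'M[R]_(K, d)) : R :=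
  match n with
  | 0 => 0
  | n'.+1 =>
      let x := (adv h).1 in
      let y := (adv h).2 in
      let m := Num.max (a W x) gamma in
      let W' := upd W (G x y W) in
      \sum_(k < K) predprob m (ystar W x) k *
                   (payoff x y k + gaptron_exp n' (rcons h k) W')
  end.

End Gaptron.

(* Main.v *)
Require Import Defs.
From HB Require Import structures.
From mathcomp Require Import all_boot all_order all_algebra.
From mathcomp Require Import all_classical all_reals all_analysis.
From mathcomp Require Import ring lra.
Import Order.TTheory GRing.Theory Num.Theory.
Local Open Scope ring_scope.

Set Implicit Arguments. Unset Strict Implicit.


Lemma mxdotC (R : realType) K d (A B : 'M[R]_(K, d)) : mxdot A B = mxdot B A.
Proof. by apply: eq_bigr => i _; apply: eq_bigr => j _; rewrite mulrC. Qed.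

Lemma mxdotDl (R : realType) K d (A B C : 'M[R]_(K, d)) :
  mxdot (A + B) C = mxdot A C + mxdot B C.
Proof.
rewrite /mxdot -big_split; apply: eq_bigr => i _.
rewrite -big_split; apply: eq_bigr => j _; by rewrite !mxE mulrDl.
Qed.

Lemma mxdotZl (R : realType) K d c (A B : 'M[R]_(K, d)) :
  mxdot (c *: A) B = c * mxdot A B.
Proof.
rewrite /mxdot mulr_sumr; apply: eq_bigr => i _.
rewrite mulr_sumr; apply: eq_bigr => j _; by rewrite !mxE mulrA.
Qed.

Lemma mxdotNl (R : realType) K d (A B : 'M[R]_(K, d)) :
  mxdot (- A) B = - mxdot A B.
Proof. by rewrite -scaleN1r mxdotZl mulN1r. Qed.

Lemma mxdotDr (R : realType) K d (A B C : 'M[R]_(K, d)) :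
  mxdot C (A + B) = mxdot C A + mxdot C B.
Proof. by rewrite mxdotC mxdotDl !(mxdotC C). Qed.

Lemma mxdotZr (R : realType) K d c (A B : 'M[R]_(K, d)) :
  mxdot B (c *: A) = c * mxdot B A.
Proof. by rewrite mxdotC mxdotZl mxdotC. Qed.

Lemma mxdotNr (R : realType) K d (A B : 'M[R]_(K, d)) :
  mxdot B (- A) = - mxdot B A.
Proof. by rewrite mxdotC mxdotNl mxdotC. Qed.

Lemma mxdot_ge0 (R : realType) K d (A : 'M[R]_(K, d)) : 0 <= mxdot A A.
Proof. by apply: sumr_ge0 => i _; apply: sumr_ge0 => j _; rewrite -expr2 sqr_ge0. Qed.

Lemma mxnorm_sq (R : realType) K d (A : 'M[R]_(K, d)) : mxnorm A ^+ 2 = mxdot A A.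
Proof. by rewrite /mxnorm sqr_sqrtr // mxdot_ge0. Qed.

Lemma mxnorm_le (R : realType) K d (A : 'M[R]_(K, d)) (D : R) : 0 <= D ->
  (mxnorm A <= D) = (mxdot A A <= D ^+ 2).
Proof.
move=> hD; rewrite -mxnorm_sq; rewrite ler_sqr //; last exact: sqrtr_ge0.
Qed.


Ltac mxexp := repeat rewrite ?mxdotDl ?mxdotDr ?mxdotNl ?mxdotNr ?mxdotZl ?mxdotZr.

Lemma ogd_step (R : realType) K d
  (upd : 'M[R]_(K, d) -> 'M[R]_(K, d) -> 'M[R]_(K, d)) (eta D : R)
  (heta : 0 < eta) (hD : 0 < D) (hupd : is_proj_step upd eta D)
  (W g U : 'M[R]_(K, d)) (hU : mxnorm U <= D) :
  eta * mxdot g (W - U) <=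
  (mxdot (U - W) (U - W) - mxdot (U - upd W g) (U - upd W g)) / 2
  + eta ^+ 2 / 2 * mxdot g g.
Proof.
have [hW' hmin] := hupd W g.
set W' := upd W g in hW' hmin *.
have hW2 : mxdot W' W' <= D ^+ 2 by rewrite -mxnorm_le // ltW.
have hU2 : mxdot U U <= D ^+ 2 by rewrite -mxnorm_le // ltW.
have key : forall l : R, 0 < l <= 1 ->
  0 <= l * (eta * mxdot g (U - W') + mxdot (W' - W) (U - W'))
       + l ^+ 2 / 2 * mxdot (U - W') (U - W').
  move=> l /andP[l0 l1].
  have hV : mxnorm (W' + l *: (U - W')) <= D.
    rewrite mxnorm_le; last exact: ltW.
    have h0 := mxdot_ge0 (W' - U).
    move: h0; mxexp; rewrite (mxdotC U W') => h0.
    have h3 : 0 <= l * (1 - l) by apply: mulr_ge0; lra.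
    have h4 := mulr_ge0 h3 h0.
    have h5 : 0 <= (1 - l) * (D ^+ 2 - mxdot W' W') by apply: mulr_ge0; lra.
    have h6 : 0 <= l * (D ^+ 2 - mxdot U U) by apply: mulr_ge0; lra.
    lra.
  have := hmin _ hV.
  rewrite !mxnorm_sq.
  mxexp; rewrite ?(mxdotC W' W) ?(mxdotC U W) ?(mxdotC U W') ?(mxdotC W' g) ?(mxdotC W g) ?(mxdotC U g).
  lra.
set A := eta * mxdot g (U - W') + mxdot (W' - W) (U - W'). 
rewrite -/A in key.
set B := mxdot (U - W') (U - W').
rewrite -/B in key.
have hB : 0 <= B := mxdot_ge0 _.
have hA : 0 <= A.
  rewrite leNgt; apply/negP => hA.
  set l := - A / (B - A).
  have hBA : 0 < B - A by lra.
  have l0 : 0 < l by apply: divr_gt0; lra.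
  have l1 : l <= 1 by rewrite ler_pdivrMr //; lra.
  have e : l * (B - A) = - A by rewrite /l mulfVK // gt_eqF.
  have := key l; rewrite l0 l1 => /(_ isT) h.
  have h2 : l * A * (1 + l) < 0 by rewrite pmulr_llt0 ?pmulr_rlt0; lra.
  have e1 : l * B = - A + l * A by move: e; rewrite mulrBr; lra.
  have e2 : l ^+ 2 * B = l * (- A + l * A) by rewrite expr2 -mulrA e1.
  lra.
have hE := mxdot_ge0 ((W' - W) + eta *: g).
move: hA hE; rewrite /A /B.
mxexp; rewrite ?(mxdotC W' W) ?(mxdotC U W) ?(mxdotC U W') ?(mxdotC W' g) ?(mxdotC W g) ?(mxdotC U g).
lra.
Qed.


Lemma inner_rowD (R : realType) K d (A B : 'M[R]_(K, d)) x k :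
  inner_row (A + B) x k = inner_row A x k + inner_row B x k.
Proof. by rewrite /inner_row -big_split; apply: eq_bigr => j _; rewrite mxE mulrDl. Qed.

Lemma inner_rowZ (R : realType) K d c (A : 'M[R]_(K, d)) x k :
  inner_row (c *: A) x k = c * inner_row A x k.
Proof. by rewrite /inner_row mulr_sumr; apply: eq_bigr => j _; rewrite mxE mulrA. Qed.

Lemma sumexp_gt0 (R : realType) K (y : 'I_K) (f : 'I_K -> R) :
  0 < \sum_(j < K) expR (f j).
Proof.
rewrite (bigD1 y) //=.
have := expR_gt0 (f y).
have : 0 <= \sum_(j < K | j != y) expR (f j) by apply: sumr_ge0 => j _; exact: expR_ge0.
lra.
Qed.

Lemma ln_exp_div (R : realType) (u Z : R) : 0 < Z -> ln (expR u / Z) = u - ln Z.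
Proof.
move=> hZ; rewrite lnM ?posrE ?expR_gt0 ?invr_gt0 // lnV ?posrE // expRK.
by [].
Qed.

Lemma logloss_lse (R : realType) K d (W : 'M[R]_(K, d)) x y :
  logloss W x y = (ln (\sum_(j < K) expR (inner_row W x j)) - inner_row W x y) / ln 2.
Proof.
rewrite /logloss /log2 /softmax ln_exp_div; last exact: sumexp_gt0 y _.
by rewrite -mulNr opprB.
Qed.

Lemma dlin (R : realType) (a b : R) : is_derive (0:R) (1:R) (fun s : R => a + s * b) b.
Proof.
have -> : (fun s : R => a + s * b) = (cst a) + (fun s => s * b) by apply/funext => s.
rewrite -[X in is_derive _ _ _ X]add0r.
apply: is_deriveD.
have -> : (fun s : R => s * b) = b \*: id by apply/funext => s /=; rewrite mulrC.
rewrite -[X in is_derive _ _ _ X]mulr1.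
exact: is_deriveZ.
Qed.

Lemma dexp (R : realType) (a b : R) :
  is_derive (0:R) (1:R) (fun s : R => expR (a + s * b)) (expR a * b).
Proof.
have -> : (fun s : R => expR (a + s * b)) = expR \o (fun s => a + s * b) by [].
have := @is_derive1_comp R expR (fun s => a + s * b) 0 (expR (a + 0 * b)) b
  (is_derive_expR (a + 0 * b)) (dlin a b).
by rewrite mul0r addr0.
Qed.

Lemma dlse (R : realType) K (y : 'I_K) (a b : 'I_K -> R) :
  is_derive (0:R) (1:R) (fun s : R => ln (\sum_(j < K) expR (a j + s * b j)))
    ((\sum_(j < K) expR (a j)) ^-1 * \sum_(j < K) expR (a j) * b j).
Proof.
set Z := fun s : R => \sum_(j < K) expR (a j + s * b j).
have hZ : is_derive (0:R) (1:R) Z (\sum_(j < K) expR (a j) * b j).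
  have -> : Z = \sum_(j < K) (fun s : R => expR (a j + s * b j)).
    by rewrite fct_sumE.
  apply: is_derive_sum => j; exact: dexp.
have Z0 : 0 < Z 0 by exact: sumexp_gt0 y _.
have := @is_derive1_comp R (@ln R) Z 0 (Z 0)^-1 _ (is_derive1_ln Z0) hZ.
have -> : Z 0 = \sum_(j < K) expR (a j) by apply: eq_bigr => j _; rewrite mul0r addr0.
by [].
Qed.

Lemma grad_eq (R : realType) K d
  (G : 'rV[R]_d -> 'I_K -> 'M[R]_(K, d) -> 'M[R]_(K, d))
  (hG : is_logloss_gradient G) x y W V :
  mxdot (G x y W) V =
  (\sum_(j < K) softmax W x j * inner_row V x j - inner_row V x y) / ln 2.
Proof.
set a := inner_row W x; set b := inner_row V x.
have ef : (fun s : R => logloss (W + s *: V) x y) =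
  (ln 2)^-1 \*: ((fun s : R => ln (\sum_(j < K) expR (a j + s * b j)))
                 - (fun s : R => a y + s * b y)).
  apply/funext => s /=; rewrite logloss_lse mulrC; congr (_ * (_ - _)).
    by congr ln; apply: eq_bigr => j _; rewrite inner_rowD inner_rowZ.
  by rewrite inner_rowD inner_rowZ.
have h1 := hG x y W V; rewrite ef in h1.
have h2 := is_deriveZ (ln 2)^-1 (is_deriveB (dlse y a b) (dlin (a y) (b y))).
have e1 := @derive_val _ _ _ _ _ _ _ h1.
have e2 := @derive_val _ _ _ _ _ _ _ h2.
rewrite e1 in e2; rewrite e2 /=.
rewrite [LHS]mulrC; congr ((_ - _) * _).
rewrite mulr_sumr; apply: eq_bigr => j _; rewrite /softmax -/a.
by rewrite mulrA [_ * expR _]mulrC.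
Qed.


Lemma softmax_gt0 (R : realType) K d (W : 'M[R]_(K, d)) x k : 0 < softmax W x k.
Proof. by rewrite /softmax divr_gt0 ?expR_gt0 // (sumexp_gt0 k). Qed.

Lemma sum_softmax (R : realType) K d (W : 'M[R]_(K, d)) x (y : 'I_K) :
  \sum_(k < K) softmax W x k = 1.
Proof.
by rewrite /softmax -mulr_suml divff // gt_eqF // (sumexp_gt0 y).
Qed.

Lemma softmax_le1 (R : realType) K d (W : 'M[R]_(K, d)) x k : softmax W x k <= 1.
Proof.
rewrite -(sum_softmax W x k) (bigD1 k) //= lerDl.
by apply: sumr_ge0 => j _; exact/ltW/softmax_gt0.
Qed.

Lemma softmax2 (R : realType) K d (W : 'M[R]_(K, d)) x (y z : 'I_K) : z != y ->
  softmax W x y + softmax W x z <= 1.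
Proof.
move=> hzy; rewrite -(sum_softmax W x y) (bigD1 y) //= lerD2l.
rewrite (bigD1 z) //=.
rewrite lerDl; apply: sumr_ge0 => j _; exact/ltW/softmax_gt0.
Qed.

Lemma ln2_gt0 (R : realType) : 0 < ln (2 : R).
Proof. by apply: ln_gt0; rewrite ltr1n. Qed.

Lemma logloss_convex (R : realType) K d
  (G : 'rV[R]_d -> 'I_K -> 'M[R]_(K, d) -> 'M[R]_(K, d))
  (hG : is_logloss_gradient G) x y W U :
  logloss W x y + mxdot (G x y W) (U - W) <= logloss U x y.
Proof.
rewrite grad_eq // !logloss_lse.
set a := inner_row W x; set b := inner_row (U - W) x.
have hab : forall j, inner_row U x j = a j + b j.
  by move=> j; rewrite -inner_rowD addrC subrK.
set c := \sum_(j < K) softmax W x j * b j.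
set Z := \sum_(j < K) expR (a j).
have hZ : 0 < Z by exact: sumexp_gt0 y _.
have hcZ : c * Z = \sum_(j < K) expR (a j) * b j.
  rewrite /c mulr_suml; apply: eq_bigr => j _; rewrite /softmax -/a -/Z.
  by rewrite mulrAC divfK // gt_eqF.
have hsum : expR c * Z <= \sum_(j < K) expR (inner_row U x j).
  have -> : expR c * Z = \sum_(j < K) expR (a j) * (expR c * (1 + (b j - c))).
    rewrite (eq_bigr (fun j => expR c * expR (a j) + expR c * (expR (a j) * b j)
       - expR c * c * expR (a j))); last by move=> j _; ring.
    rewrite sumrB big_split /= -!mulr_sumr -/Z -hcZ; ring.
  apply: ler_sum => j _; rewrite hab expRD.
  rewrite ler_pM2l ?expR_gt0 //.
  rewrite -[X in _ <= expR X](subrK c) expRD mulrC.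
  rewrite ler_pM2r ?expR_gt0 //.
  exact: expR_ge1Dx.
have hln : c + ln Z <= ln (\sum_(j < K) expR (inner_row U x j)).
  rewrite -[c]expRK -lnM ?posrE ?expR_gt0 //.
  rewrite ler_ln ?posrE ?expR_gt0 ?mulr_gt0 //.
    exact: expR_gt0.
  exact: sumexp_gt0 y _.
have hL := @ln2_gt0 R.
rewrite (hab y) -mulrDl ler_pM2r ?invr_gt0 //.
lra.
Qed.


Lemma sum_delta (R : realType) n (j : 'I_n) (F : 'I_n -> R) :
  \sum_(k < n) F k * (k == j)%:R = F j.
Proof.
rewrite (bigD1 j) //= eqxx mulr1 big1 ?addr0 // => k /negbTE ->; by rewrite mulr0.
Qed.

Lemma mxdot_delta (R : realType) K d (A : 'M[R]_(K, d)) j i :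
  mxdot A (delta_mx j i) = A j i.
Proof.
rewrite /mxdot (bigD1 j) //= [X in _ + X]big1 ?addr0.
  rewrite (bigD1 i) //= [X in _ + X]big1 ?addr0; first by rewrite mxE !eqxx mulr1.
  by move=> l hl; rewrite mxE eqxx (negbTE hl) mulr0.
move=> k hk; apply: big1 => l _; by rewrite mxE (negbTE hk) mulr0.
Qed.

Lemma inner_row_delta (R : realType) K d j i (x : 'rV[R]_d) (k : 'I_K) :
  inner_row (delta_mx j i) x k = (k == j)%:R * x 0 i.
Proof.
rewrite /inner_row; case: (eqVneq k j) => [->|hk].
  rewrite (bigD1 i) //= big1 ?addr0; first by rewrite mxE !eqxx.
  by move=> l hl; rewrite mxE eqxx (negbTE hl) mul0r.
rewrite mul0r; apply: big1 => l _; by rewrite mxE (negbTE hk) mul0r.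
Qed.

Lemma G_entry (R : realType) K d
  (G : 'rV[R]_d -> 'I_K -> 'M[R]_(K, d) -> 'M[R]_(K, d))
  (hG : is_logloss_gradient G) x y W j i :
  G x y W j i = (softmax W x j - (j == y)%:R) * x 0 i / ln 2.
Proof.
rewrite -mxdot_delta grad_eq //; congr (_ / _).
rewrite inner_row_delta.
under eq_bigr do rewrite inner_row_delta mulrCA mulrC.
by rewrite sum_delta eq_sym mulrBl.
Qed.

Lemma G_norm (R : realType) K d
  (G : 'rV[R]_d -> 'I_K -> 'M[R]_(K, d) -> 'M[R]_(K, d))
  (hG : is_logloss_gradient G) x y W (X : R) (hX : 0 <= X) (hx : rnorm x <= X) :
  mxdot (G x y W) (G x y W) <= 2 * (1 - softmax W x y) * X ^+ 2 / (ln 2) ^+ 2.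
Proof.
set c := fun j => softmax W x j - (j == y)%:R.
set S := \sum_(i < d) x 0 i ^+ 2.
have hS0 : 0 <= S by apply: sumr_ge0 => i _; exact: sqr_ge0.
have hSX : S <= X ^+ 2.
  have := sqr_sqrtr hS0; rewrite -/(rnorm x) /S => <-.
  have := @sqrtr_ge0 _ S; rewrite -/(rnorm x) /S => h; nra.
have e : mxdot (G x y W) (G x y W) = (\sum_(j < K) c j ^+ 2) * S / (ln 2) ^+ 2.
  rewrite -mulrA mulr_suml; apply: eq_bigr => j _.
  rewrite /S mulr_suml mulr_sumr; apply: eq_bigr => i _.
  rewrite !G_entry // /c.
move: (softmax W x j - _) (x 0 i) (ln (2:R)) => p q r; rewrite -exprVn; ring.
have hc : \sum_(j < K) c j ^+ 2 <= 2 * (1 - softmax W x y).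
  have hs := sum_softmax W x y.
  rewrite (bigD1 y) //= in hs.
  rewrite (bigD1 y) //= /c eqxx.
  have h1 : \sum_(j < K | j != y) (softmax W x j - (j == y)%:R) ^+ 2
          <= \sum_(j < K | j != y) softmax W x j.
    apply: ler_sum => j hj; rewrite (negbTE hj) subr0.
    have := softmax_gt0 W x j; have := softmax_le1 W x j; nra.
  have := softmax_gt0 W x y; have := softmax_le1 W x y; move=> h2 h3.
rewrite [true%:R]/=.
  have h4 : 0 <= (1 - softmax W x y) * softmax W x y by apply: mulr_ge0; lra.
  nra.
have hL := @ln2_gt0 R.
have hL2 : 0 < ln (2:R) ^+ 2 by rewrite exprn_gt0.
rewrite e ler_pM2r ?invr_gt0 //.
have hc0 : 0 <= \sum_(j < K) c j ^+ 2 by apply: sumr_ge0 => j _; exact: sqr_ge0.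
nra.
Qed.


Lemma ln_le_sub1 (R : realType) (s : R) : 0 < s -> ln s <= s - 1.
Proof. move=> hs; have := @le_ln1Dx R (s - 1); rewrite addrCA subrr addr0; apply; lra. Qed.

Lemma ln2_le1 (R : realType) : ln (2:R) <= 1.
Proof. by have := @ln_le_sub1 R 2 (ltr0Sn _ 1); lra. Qed.

Lemma ln2_ge_half (R : realType) : 1 / 2 <= ln (2:R).
Proof.
have h2 : 0 < (2:R)^-1 by rewrite invr_gt0 (ltr0Sn _ 1).
have := ln_le_sub1 h2; rewrite lnV ?posrE ?(ltr0Sn _ 1) // div1r.
lra.
Qed.

Lemma ln_le_2s (R : realType) (s : R) : 0 < s -> ln s <= 2 * s - 1 - ln 2.
Proof.
move=> hs; have := @ln_le_sub1 R (2 * s); rewrite lnM ?posrE //.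
move/(_ (mulr_gt0 (ltr0Sn _ 1) hs)); lra.
Qed.

Lemma softmax_le_ys (R : realType) K d ystar (hys : is_argmax_label ystar)
  (W : 'M[R]_(K, d)) x k : softmax W x k <= softmax W x (ystar W x).
Proof.
rewrite /softmax ler_pM2r ?invr_gt0 ?(sumexp_gt0 k) //.
by rewrite ler_expR hys.
Qed.

Lemma pstar_ge (R : realType) K d (W : 'M[R]_(K, d)) x k : softmax W x k <= pstar W x.
Proof. exact: le_bigmax. Qed.

Lemma pstar_le (R : realType) K d ystar (hys : is_argmax_label ystar)
  (W : 'M[R]_(K, d)) x : pstar W x <= softmax W x (ystar W x).
Proof.
apply: bigmax_le; first exact/ltW/softmax_gt0.
by move=> k _; exact: softmax_le_ys.
Qed.

Lemma sum_predprob (R : realType) K (m : R) (ys y : 'I_K) :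
  \sum_(k < K) predprob m ys k * (k != y)%:R
  = (1 - m) * (ys != y)%:R + m / K%:R * (K%:R - 1).
Proof.
rewrite /predprob; under eq_bigr do rewrite mulrDl.
rewrite big_split /=; congr (_ + _).
  under eq_bigr do rewrite mulrAC.
  by rewrite sum_delta.
rewrite -mulr_sumr; congr (_ * _).
have e : forall k : 'I_K, (k != y)%:R = 1 - (k == y)%:R :> R.
  by move=> k; case: (k == y); rewrite ?subr0 ?subrr.
under eq_bigr do rewrite e.
have h1 : \sum_(k < K) (k == y)%:R = 1 :> R.
  by rewrite (bigD1 y) //= eqxx big1 ?addr0 // => k /negbTE ->.
by rewrite sumrB h1 sumr_const card_ord.
Qed.

Lemma pstar_ge0 (R : realType) K d (W : 'M[R]_(K, d)) x : 0 <= pstar W x.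
Proof. exact: bigmax_ge_id. Qed.

Lemma pstar_le1 (R : realType) K d (W : 'M[R]_(K, d)) x : pstar W x <= 1.
Proof. by apply: bigmax_le => // k _; exact: softmax_le1. Qed.

Lemma m_bounds (R : realType) K d (W : 'M[R]_(K, d)) x :
  0 <= Num.max (gap_logistic W x) 0 <= 1.
Proof.
have h0 := pstar_ge0 W x; have h1 := pstar_le1 W x.
rewrite /gap_logistic; case: ifP => hp.
  by rewrite max_l; lra.
rewrite subr0 max_l //; lra.
Qed.

Lemma final_real (R : realType) (L Kr m b s ls : R) : 0 < L -> 0 < Kr ->
  L * Kr * (1 - m) * b + L * m * (Kr - 1) + (1 - s) / 2 <= - (Kr * ls) ->
  (1 - m) * b + m / Kr * (Kr - 1) + (1 - s) / (2 * Kr * L) <= - (ls / L).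
Proof.
move=> hL hK h; rewrite -(ler_pM2l (mulr_gt0 hK hL)).
have -> : Kr * L * ((1 - m) * b + m / Kr * (Kr - 1) + (1 - s) / (2 * Kr * L))
  = L * Kr * (1 - m) * b + L * m * (Kr - 1) + (1 - s) / 2.
  by field; rewrite !gt_eqF.
have -> : Kr * L * (- (ls / L)) = - (Kr * ls) by field; rewrite gt_eqF.
exact: h.
Qed.

Lemma gap_ineq (R : realType) K d ystar
  (G : 'rV[R]_d -> 'I_K -> 'M[R]_(K, d) -> 'M[R]_(K, d))
  (hys : is_argmax_label ystar) (hG : is_logloss_gradient G)
  (hK : (2 <= K)%N) (X : R) (hX : 0 < X) x y W (hx : rnorm x <= X) :
  \sum_(k < K) predprob (Num.max (gap_logistic W x) 0) (ystar W x) k * (k != y)%:R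
  + ln 2 / (2 * K%:R * X ^+ 2) / 2 * mxdot (G x y W) (G x y W)
  <= logloss W x y.
Proof.
rewrite sum_predprob.
set L := ln (2:R).
have hL1 : 1 / 2 <= L := ln2_ge_half R.
have hL2 : L <= 1 := ln2_le1 R.
set Kr := K%:R.
have hKr : 2 <= Kr by rewrite /Kr (ler_nat R 2 K).
set s := softmax W x y.
set ys := ystar W x.
set p := pstar W x.
have hs0 : 0 < s := softmax_gt0 W x y.
have hs1 : s <= 1 := softmax_le1 W x y.
have hsp : s <= p := pstar_ge W x y.
have hpS : p <= softmax W x ys := pstar_le hys W x.
have hS1 : softmax W x ys <= 1 := softmax_le1 W x ys.
have hln1 : ln s <= s - 1 := ln_le_sub1 hs0.
have hln2 : ln s <= 2 * s - 1 - L := ln_le_2s hs0.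
have hgg := G_norm hG y W (ltW hX) hx.
have hT : L / (2 * Kr * X ^+ 2) / 2 * mxdot (G x y W) (G x y W) <= (1 - s) / (2 * Kr * L).
  apply: (le_trans (y := L / (2 * Kr * X ^+ 2) / 2 * (2 * (1 - s) * X ^+ 2 / L ^+ 2))).
    rewrite ler_wpM2l //; apply: mulr_ge0; last lra.
    apply: divr_ge0; [lra|]; apply: mulr_ge0; [lra|exact: sqr_ge0].
  rewrite le_eqVlt; apply/orP; left; apply/eqP.
  field; rewrite /L /Kr; apply/and3P; split.
  - by rewrite gt_eqF // ln2_gt0.
  - by rewrite gt_eqF //; lra.
  - by rewrite gt_eqF.
apply: (le_trans (lerD (lexx _) hT)).
rewrite /logloss /log2 -/s -/L.
apply: final_real; [exact: ln2_gt0| lra |].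
rewrite /gap_logistic -/p.
have hKL1 : 0 <= Kr * ((s - 1) - ln s) by apply: mulr_ge0; lra.
have hKL2 : 0 <= Kr * ((2 * s - 1 - L) - ln s) by apply: mulr_ge0; lra.
have hp1 : p <= 1 := pstar_le1 W x.
case: ifP => hp.
  rewrite max_l; last lra.
  case: (eqVneq ys y) => hy.
    have -> : ((~~ true)%:R : R) = 0 by [].
    rewrite hy -/s in hpS.
    have ps : p = s by lra.
    rewrite ps.
    have h1 : 0 <= (1 - s) * (1 - L) * (Kr - 1) by repeat apply: mulr_ge0; lra.
    lra.
  have -> : ((~~ false)%:R : R) = 1 by [].
  have hss := softmax2 W x hy; rewrite -/s in hss.
  have h1 : 0 <= L * (1 - p - s) by apply: mulr_ge0; lra.
  have h2 : 0 <= (L - 1 / 2) * s by apply: mulr_ge0; lra.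
  have h3 : 0 <= (Kr - 2) * (1 - 2 * s) by apply: mulr_ge0; lra.
  lra.
move: hp; move/negbT; rewrite -ltNge => hp.
rewrite subr0 max_l; last lra.
have h3 : 0 <= Kr * (1 - 2 * s) by apply: mulr_ge0; lra.
lra.
Qed.


Lemma div_step (R : realType) (eta a dW dW' gg : R) : 0 < eta ->
  eta * a <= (dW - dW') / 2 + eta ^+ 2 / 2 * gg ->
  dW' / (2 * eta) <= dW / (2 * eta) - a + eta / 2 * gg.
Proof.
move=> he h; have h2 : 0 < 2 * eta by lra.
rewrite -(ler_pM2l h2).
have -> : 2 * eta * (dW' / (2 * eta)) = dW' by field; rewrite gt_eqF.
have -> : 2 * eta * (dW / (2 * eta) - a + eta / 2 * gg) = dW - 2 * eta * a + eta ^+ 2 * gg.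
  by field; rewrite gt_eqF.
lra.
Qed.

Lemma sum_pp (R : realType) K (m : R) (ys : 'I_K) :
  \sum_(k < K) predprob m ys k = 1.
Proof.
rewrite /predprob big_split /= -mulr_sumr.
have h1 : \sum_(k < K) (k == ys)%:R = 1 :> R.
  by rewrite (bigD1 ys) //= eqxx big1 ?addr0 // => k /negbTE ->.
have hK : (0 < K)%N by apply: leq_ltn_trans (ltn_ord ys).
rewrite h1 sumr_const card_ord mulr1 -[_ / _ *+ K]mulr_natr divfK ?subrK //.
by rewrite pnatr_eq0 -lt0n.
Qed.

Lemma pp_ge0 (R : realType) K d (W : 'M[R]_(K, d)) x (ys k : 'I_K) :
  0 <= predprob (Num.max (gap_logistic W x) 0) ys k.
Proof.
have /andP[h0 h1] := m_bounds W x.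
rewrite /predprob; apply: addr_ge0.
  by apply: mulr_ge0; [lra | case: (k == ys)].
by apply: divr_ge0.
Qed.

Unset Implicit Arguments.
Theorem theorem1 (R : realType) (K d T : nat) (X D : R)
  (hK : (2 <= K)%N) (hd : (1 <= d)%N) (hT : (1 <= T)%N)
  (hX : 0 < X) (hD : 0 < D)
  (ystar : 'M[R]_(K, d) -> 'rV[R]_d -> 'I_K)
  (hys : is_argmax_label ystar)
  (G : 'rV[R]_d -> 'I_K -> 'M[R]_(K, d) -> 'M[R]_(K, d))
  (hG : is_logloss_gradient G)
  (upd : 'M[R]_(K, d) -> 'M[R]_(K, d) -> 'M[R]_(K, d))
  (hupd : is_proj_step upd (ln 2 / (2 * K%:R * X ^+ 2)) D)
  (adv : seq 'I_K -> 'rV[R]_d * 'I_K)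
  (hadv : forall h, rnorm (adv h).1 <= X)
  (U : 'M[R]_(K, d)) (hU : mxnorm U <= D) :
  gaptron_exp (@gap_logistic R K d) 0 ystar G upd adv
    (fun x y k => (k != y)%:R) T [::] 0
  <= gaptron_exp (@gap_logistic R K d) 0 ystar G upd adv
       (fun x y k => logloss U x y) T [::] 0
     + K%:R * X ^+ 2 * mxnorm U ^+ 2 / ln 2.
Proof.
set eta := ln 2 / (2 * K%:R * X ^+ 2).
have hL := @ln2_gt0 R.
have hKr : 2 <= K%:R :> R by rewrite (ler_nat R 2 K).
have heta : 0 < eta by apply: divr_gt0 => //; apply: mulr_gt0; [lra|exact: exprn_gt0].
suff main : forall n h W,
  gaptron_exp (@gap_logistic R K d) 0 ystar G upd adv
    (fun x y k => (k != y)%:R) n h W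
  <= gaptron_exp (@gap_logistic R K d) 0 ystar G upd adv
       (fun x y k => logloss U x y) n h W + mxdot (U - W) (U - W) / (2 * eta).
  have -> : K%:R * X ^+ 2 * mxnorm U ^+ 2 / ln 2 = mxdot (U - 0) (U - 0) / (2 * eta).
    rewrite subr0 mxnorm_sq /eta; field.
    apply/and3P; split; rewrite ?gt_eqF //; try lra.
  exact: main.
elim=> [|n IH] h W /=.
  rewrite add0r; apply: divr_ge0; [exact: mxdot_ge0 | lra].
set x := (adv h).1; set y := (adv h).2.
set m := Num.max (gap_logistic W x) 0.
set ys := ystar W x.
set g := G x y W.
set W' := upd W g.
have hgap := gap_ineq hys hG hK hX y W (hadv h).
have hcvx := logloss_convex hG x y W U.
have hogd := ogd_step heta hD hupd W g hU.
have hdiv := div_step heta hogd.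
have hpp := sum_pp m ys.
rewrite -/eta in hgap.
rewrite -opprB mxdotNr in hcvx.
set PhiW' := mxdot (U - W') (U - W') / (2 * eta).
set gm := fun k : 'I_K => gaptron_exp (@gap_logistic R K d) 0 ystar G upd adv
        (fun x y k => (k != y)%:R) n (rcons h k) W'.
set gl := fun k : 'I_K => gaptron_exp (@gap_logistic R K d) 0 ystar G upd adv
        (fun x y k => logloss U x y) n (rcons h k) W'.
apply: (le_trans (y := \sum_(k < K) (predprob m ys k * (k != y)%:R
   + predprob m ys k * gl k + predprob m ys k * PhiW'))).
  apply: ler_sum => k _; rewrite -!mulrDr; apply: ler_wpM2l; first exact: pp_ge0.
  rewrite -addrA lerD2l; exact: IH.
rewrite !big_split /= -mulr_suml hpp mul1r.
under [X in _ <= X + _]eq_bigr do rewrite mulrDr.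
rewrite big_split /= -mulr_suml hpp mul1r.
rewrite /PhiW'.
lra.
Qed.
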